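(* Let $X$ be a continuum, let $n\geq2$ be an integer, and let $f:X\to X$ be a map. Consider the statements: (1) $f$ is $\triangle$-transitive; (2) $F_n(f)$ is $\triangle$-transitive; (3) $SF_n(f)$ is $\triangle$-transitive. Then (2) implies (1), and (2) implies (3).
   Context: A continuum is a nonempty compact connected metric space. $F_n(X)$ is the set of nonempty subsets of $X$ with at most $n$ points, with the Hausdorff metric topology; $F_1(X)=\{\{x\}:x\in X\}$; $F_n(f)(A)=f(A)$. $SF_n(X)=F_n(X)/F_1(X)$ is the quotient collapsing $F_1(X)$ to a point, $q$ the quotient map, $F_X=q(F_1(X))$, and $SF_n(f)(\chi)=q(F_n(f)(q^{-1}(\chi)))$ for $\chi\neq F_X$, $SF_n(f)(F_X)=F_X$. A map $g:Z\to Z$ is $\triangle$-transitive if for every $m\in\mathbb{N}$ there is a dense subset $Y\subseteq Z$ such that for each $y\in Y$ the set $\{(g^k(y),g^{2k}(y),\dots,g^{mk}(y)):k\in\mathbb{Z}_+\}$ is dense in $Z^m$. *)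

(* Defs.v *)
From Stdlib Require Import Reals List Arith ClassicalDescription.
Open Scope R_scope.

(** * Generic topological notions relative to a subspace S of a carrier T
    with a family of open sets [opn]; the subspace topology has opens U ∩ S. *)

Definition dense_in {T : Type} (S : T -> Prop) (opn : (T -> Prop) -> Prop)
  (Y : T -> Prop) : Prop :=
  forall U, opn U -> (exists x, S x /\ U x) -> exists y, Y y /\ U y.

(* points of S^m, represented as functions nat -> T (coordinates 0..m-1) *)
Definition prod_pts {T : Type} (S : T -> Prop) (m : nat) (x : nat -> T) : Prop :=
  forall i, (i < m)%nat -> S (x i).

Definition prod_open {T : Type} (S : T -> Prop) (opn : (T -> Prop) -> Prop)
  (m : nat) (W : (nat -> T) -> Prop) : Prop :=
  forall x, prod_pts S m x -> W x ->
    exists U : nat -> T -> Prop,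
      (forall i, (i < m)%nat -> opn (U i) /\ U i (x i)) /\
      (forall z, prod_pts S m z -> (forall i, (i < m)%nat -> U i (z i)) -> W z).

Definition orbit_tuples {T : Type} (g : T -> T) (m : nat) (y : T)
  (x : nat -> T) : Prop :=
  exists k : nat, (1 <= k)%nat /\
    forall i, (i < m)%nat -> x i = Nat.iter ((i + 1) * k) g y.

Definition tri_transitive {T : Type} (S : T -> Prop)
  (opn : (T -> Prop) -> Prop) (g : T -> T) : Prop :=
  forall m : nat, (1 <= m)%nat ->
    exists Y : T -> Prop,
      (forall y, Y y -> S y) /\ dense_in S opn Y /\
      forall y, Y y -> dense_in (prod_pts S m) (prod_open S opn m)
                                (orbit_tuples g m y).

Definition is_metric {X : Type} (d : X -> X -> R) : Prop :=
  (forall x y, 0 <= d x y) /\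
  (forall x y, d x y = 0 <-> x = y) /\
  (forall x y, d x y = d y x) /\
  (forall x y z, d x z <= d x y + d y z).

Definition metric_open {X : Type} (d : X -> X -> R) (U : X -> Prop) : Prop :=
  forall x, U x -> exists e, 0 < e /\ forall y, d x y < e -> U y.

Definition compact_space {X : Type} (d : X -> X -> R) : Prop :=
  forall (I : Type) (U : I -> X -> Prop),
    (forall i, metric_open d (U i)) -> (forall x, exists i, U i x) ->
    exists l : list I, forall x, exists i, In i l /\ U i x.

Definition connected_space {X : Type} (d : X -> X -> R) : Prop :=
  ~ exists U V : X -> Prop,
      metric_open d U /\ metric_open d V /\
      (exists x, U x) /\ (exists x, V x) /\
      (forall x, ~ (U x /\ V x)) /\ (forall x, U x \/ V x).

Definition continuum {X : Type} (d : X -> X -> R) : Prop :=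
  is_metric d /\ (exists x : X, True) /\ compact_space d /\ connected_space d.

Definition continuous_map {X : Type} (d : X -> X -> R) (f : X -> X) : Prop :=
  forall x e, 0 < e -> exists delta, 0 < delta /\
    forall y, d x y < delta -> d (f x) (f y) < e.

Definition Fn_pts {X : Type} (n : nat) (A : X -> Prop) : Prop :=
  (exists x, A x) /\
  exists l : list X, (length l <= n)%nat /\ forall x, A x <-> In x l.

(* For nonempty finite A, B: H(A,B) < e, H the Hausdorff metric
   H(A,B) = max(max_{a in A} d(a,B), max_{b in B} d(b,A)). *)
Definition hausdorff_lt {X : Type} (d : X -> X -> R) (A B : X -> Prop) (e : R)
  : Prop :=
  (forall a, A a -> exists b, B b /\ d a b < e) /\
  (forall b, B b -> exists a, A a /\ d a b < e).

Definition Fn_open {X : Type} (d : X -> X -> R) (n : nat)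
  (U : (X -> Prop) -> Prop) : Prop :=
  forall A, Fn_pts n A -> U A ->
    exists e, 0 < e /\ forall B, Fn_pts n B -> hausdorff_lt d A B e -> U B.

Definition Fn_map {X : Type} (f : X -> X) (A : X -> Prop) : X -> Prop :=
  fun y => exists x, A x /\ y = f x.

(** * The quotient SF_n(X) = F_n(X)/F_1(X)
    Carrier: option (X -> Prop); None is the point F_X, Some A (A in
    F_n(X) \ F_1(X)) the class of A. *)

Definition is_singleton {X : Type} (A : X -> Prop) : Prop :=
  exists x, forall y, A y <-> y = x.

Definition q_map {X : Type} (A : X -> Prop) : option (X -> Prop) :=
  if excluded_middle_informative (is_singleton A) then None else Some A.

Definition SF_pts {X : Type} (n : nat) (c : option (X -> Prop)) : Prop :=
  match c with
  | None => True
  | Some A => Fn_pts n A /\ ~ is_singleton A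
  end.

Definition SF_open {X : Type} (d : X -> X -> R) (n : nat)
  (V : option (X -> Prop) -> Prop) : Prop :=
  Fn_open d n (fun A => V (q_map A)).

Definition SF_map {X : Type} (f : X -> X) (c : option (X -> Prop))
  : option (X -> Prop) :=
  match c with
  | None => None
  | Some A => q_map (Fn_map f A)
  end.

(* Main.v *)
Require Import Defs.
From Stdlib Require Import Reals List Arith Lra Lia ClassicalDescription.
Open Scope R_scope.

Lemma single_Fn {X : Type} (n : nat) (x : X) : (1 <= n)%nat ->
  Fn_pts n (fun y => y = x).
Proof.
  intros Hn. split. exists x; reflexivity.
  exists (x :: nil). split. simpl; lia.
  intros y; simpl; split; intros H. left; auto. destruct H as [H|[]]; auto.
Qed.

Lemma q_single {X : Type} (x : X) : q_map (fun y => y = x) = None.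
Proof.
  unfold q_map. destruct (excluded_middle_informative _) as [_|H]; auto.
  exfalso; apply H; exists x; tauto.
Qed.

Lemma q_nonsingle {X : Type} (A : X -> Prop) : ~ is_singleton A -> q_map A = Some A.
Proof.
  intros H. unfold q_map. destruct (excluded_middle_informative _) as [H'|_]; tauto.
Qed.

Lemma q_SF {X : Type} n (A : X -> Prop) : Fn_pts n A -> SF_pts n (q_map A).
Proof.
  intros H. unfold q_map. destruct (excluded_middle_informative _); simpl; auto.
Qed.

Lemma SF_comm {X : Type} (f : X -> X) (A : X -> Prop) :
  SF_map f (q_map A) = q_map (Fn_map f A).
Proof.
  unfold q_map at 1. destruct (excluded_middle_informative (is_singleton A)) as [[x Hx]|H].
  - simpl. unfold q_map. destruct (excluded_middle_informative _) as [_|H]; auto.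
    exfalso; apply H. exists (f x). intros y; unfold Fn_map; split.
    + intros [z [Hz ->]]. apply Hx in Hz; subst; auto.
    + intros ->. exists x. split; auto. apply Hx; auto.
  - simpl. reflexivity.
Qed.

Lemma SF_iter {X : Type} (f : X -> X) (A : X -> Prop) j :
  Nat.iter j (SF_map f) (q_map A) = q_map (Nat.iter j (Fn_map f) A).
Proof.
  induction j; simpl; auto. rewrite IHj. apply SF_comm.
Qed.

Lemma iter_mem {X : Type} (f : X -> X) (A : X -> Prop) a j :
  A a -> Nat.iter j (Fn_map f) A (Nat.iter j f a).
Proof.
  intros Ha; induction j; simpl; auto. exists (Nat.iter j f a); auto.
Qed.

Lemma sub_open {X : Type} (d : X -> X -> R) n (U : X -> Prop) :
  metric_open d U -> Fn_open d n (fun A => forall y, A y -> U y).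
Proof.
  intros HU A [_ [l [_ Hl]]] HA.
  assert (H : exists e, 0 < e /\ forall x, In x l -> forall y, d x y < e -> U y).
  { assert (Hs : forall x, In x l -> U x) by (intros x Hx; apply HA, Hl, Hx).
    clear Hl HA. induction l as [|a l IH].
    - exists 1. split. lra. intros x [].
    - destruct IH as [e [He IH]]. intros x Hx; apply Hs; right; auto.
      destruct (HU a (Hs a (or_introl eq_refl))) as [e' [He' H']].
      exists (Rmin e e'). split. apply Rmin_pos; auto.
      intros x [<-|Hx] y Hy.
      + apply H'. eapply Rlt_le_trans; [exact Hy|apply Rmin_r].
      + apply (IH x Hx). eapply Rlt_le_trans; [exact Hy|apply Rmin_l]. }
  destruct H as [e [He H]]. exists e. split; auto.
  intros B _ [_ HB] b Hb. destruct (HB b Hb) as [a [Ha Hab]].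
  apply (H a); auto. apply Hl; auto.
Qed.

Theorem theorem10 (X : Type) (d : X -> X -> R) (n : nat) (f : X -> X) :
  continuum d -> (2 <= n)%nat -> continuous_map d f ->
  tri_transitive (Fn_pts n) (Fn_open d n) (Fn_map f) ->
  tri_transitive (fun _ : X => True) (metric_open d) f /\
  tri_transitive (SF_pts n) (SF_open d n) (SF_map f).
Proof.
  intros [_ [[x0 _] _]] Hn _ HT.
  assert (Hn1 : (1 <= n)%nat) by lia.
  split.
  - intros m Hm. destruct (HT m Hm) as [Y [HYS [HYd HYo]]].
    exists (fun y => exists A, Y A /\ A y). split; [auto|split].
    + intros U HU [x [_ Hx]].
      destruct (HYd (fun A => forall y, A y -> U y)) as [A [HA HAU]].
      * apply sub_open; auto.
      * exists (fun y => y = x). split. apply single_Fn; auto. intros y ->; auto.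
      * destruct (HYS A HA) as [[a Ha] _]. exists a. split; eauto.
    + intros y [A [HA Hy]] W HW [c [Hc Wc]].
      destruct (HW c Hc Wc) as [U [HU HUW]].
      destruct (HYo A HA (fun Z => forall i, (i < m)%nat -> forall y, Z i y -> U i y))
        as [Z [[k [Hk HZ]] HZU]].
      * intros Z HZ HZU. exists (fun i A => forall y, A y -> U i y). split.
        -- intros i Hi. split. apply sub_open. apply HU; auto. apply HZU; auto.
        -- intros z _ Hz i Hi. apply Hz; auto.
      * exists (fun i => fun y => y = c i). split.
        -- intros i Hi. apply single_Fn; auto.
        -- intros i Hi y0 ->. apply HU; auto.
      * exists (fun i => Nat.iter ((i+1)*k) f y). split.
        -- exists k. split; auto.
        -- apply HUW. intros i Hi; exact I.
           intros i Hi. apply (HZU i Hi). rewrite HZ by auto. apply iter_mem; auto.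
  - intros m Hm. destruct (HT m Hm) as [Y [HYS [HYd HYo]]].
    exists (fun c => exists A, Y A /\ c = q_map A). split; [|split].
    + intros c [A [HA ->]]. apply q_SF; auto.
    + intros U HU [c [Hc Uc]].
      destruct (HYd (fun A => U (q_map A))) as [A [HA HAU]].
      * exact HU.
      * destruct c as [B|].
        -- exists B. destruct Hc as [HB HB']. rewrite q_nonsingle; auto.
        -- exists (fun y => y = x0). rewrite q_single. split; auto. apply single_Fn; auto.
      * exists (q_map A). eauto.
    + intros y [A [HA ->]] W HW [c [Hc Wc]].
      destruct (HYo A HA (fun Z => W (fun i => q_map (Z i)))) as [Z [[k [Hk HZ]] HZW]].
      * intros Z HZ HWZ.
        destruct (HW (fun i => q_map (Z i))) as [U [HU HUW]]; auto.
        { intros i Hi. apply q_SF; auto. }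
        exists (fun i A => U i (q_map A)). split.
        -- intros i Hi. split. apply HU; auto. apply HU; auto.
        -- intros z Hz Hz'. apply HUW; auto. intros i Hi. apply q_SF; auto.
      * destruct (HW c Hc Wc) as [U [HU HUW]].
        exists (fun i => match c i with None => (fun y => y = x0) | Some B => B end).
        split.
        -- intros i Hi. specialize (Hc i Hi). destruct (c i) as [B|].
           destruct Hc; auto. apply single_Fn; auto.
        -- apply HUW.
           ++ intros i Hi. specialize (Hc i Hi). destruct (c i) as [B|].
              destruct Hc as [HB HB']. apply q_SF; auto. apply q_SF, single_Fn; auto.
           ++ intros i Hi. assert (E : q_map (match c i with None => (fun y => y = x0) | Some B => B end) = c i).
              { specialize (Hc i Hi). destruct (c i) as [B|].
                destruct Hc. apply q_nonsingle; auto. apply q_single. }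
              rewrite E. apply HU; auto.
      * exists (fun i => q_map (Z i)). split; auto.
        exists k. split; auto. intros i Hi. rewrite HZ by auto. symmetry. apply SF_iter.
Qed.
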